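(* Let $r \ge 1$ and let $E, B \subseteq \mathbb{R}^r$ be axis-aligned bounding boxes. Then the function $g : \mathbb{R}^r \to \mathbb{R}$ defined by $g(p) = \mathrm{MaxDist}(p, E)^2 - \mathrm{MinDist}(p, B)^2$ is convex.
   Context: An axis-aligned bounding box (AABB) in $\mathbb{R}^r$ is a set $M = \prod_{d=1}^r [\check{M}_d, \hat{M}_d]$ with real numbers $\check{M}_d \le \hat{M}_d$ for each $d$. $\mathrm{dist}$ is the Euclidean distance on $\mathbb{R}^r$. For a point $p$ and an AABB $M$, $\mathrm{MaxDist}(p, M) = \max_{q \in M} \mathrm{dist}(p, q)$ and $\mathrm{MinDist}(p, M) = \min_{q \in M} \mathrm{dist}(p, q)$. *)

(* Defs.v *)
From mathcomp Require Import all_boot all_order all_algebra.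
From mathcomp Require Import all_classical all_reals.
Set Implicit Arguments. Unset Strict Implicit. Unset Printing Implicit Defensive.
Import Order.TTheory GRing.Theory Num.Theory.
Local Open Scope ring_scope.
Local Open Scope classical_set_scope.

Definition dist (R : realType) (r : nat) (p q : 'rV[R]_r) : R :=
  Num.sqrt (\sum_(d < r) (p 0 d - q 0 d) ^+ 2).

Definition aabb (R : realType) (r : nat) (lo hi : 'rV[R]_r) : set 'rV[R]_r :=
  [set q | forall d : 'I_r, lo 0 d <= q 0 d <= hi 0 d].

(* MaxDist / MinDist: sup / inf of the distances to points of the box
   (attained since the box is compact and nonempty). *)
Definition MaxDist (R : realType) (r : nat) (p : 'rV[R]_r) (M : set 'rV[R]_r) : R :=
  sup [set dist p q | q in M].
Definition MinDist (R : realType) (r : nat) (p : 'rV[R]_r) (M : set 'rV[R]_r) : R :=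
  inf [set dist p q | q in M].

Definition convex_fun (R : realType) (r : nat) (g : 'rV[R]_r -> R) : Prop :=
  forall (p q : 'rV[R]_r) (t : R), 0 <= t <= 1 ->
    g (t *: p + (1 - t) *: q) <= t * g p + (1 - t) * g q.

(* Main.v *)
Require Import Defs.
From mathcomp Require Import all_boot all_order all_algebra.
From mathcomp Require Import all_classical all_reals.
From mathcomp Require Import ring lra.
Set Implicit Arguments. Unset Strict Implicit.
Import Order.TTheory GRing.Theory Num.Theory.
Local Open Scope ring_scope.

Definition D2 (R : realType) (r : nat) (p q : 'rV[R]_r) : R :=
  \sum_(d < r) (p 0 d - q 0 d) ^+ 2.

Lemma D2_ge0 (R : realType) (r : nat) (p q : 'rV[R]_r) : 0 <= D2 p q.
Proof. by apply: sumr_ge0 => d _; rewrite sqr_ge0. Qed.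

Lemma dist_sqr (R : realType) (r : nat) (p q : 'rV[R]_r) :
  dist p q ^+ 2 = D2 p q.
Proof. by rewrite /dist sqr_sqrtr // D2_ge0. Qed.

Lemma dist_ge0 (R : realType) (r : nat) (p q : 'rV[R]_r) : 0 <= dist p q.
Proof. exact: sqrtr_ge0. Qed.

Lemma aabb_ne (R : realType) (r : nat) (lo hi : 'rV[R]_r) :
  (forall d : 'I_r, lo 0 d <= hi 0 d) -> aabb lo hi lo.
Proof. by move=> h d; rewrite lexx h. Qed.

Lemma max_ub (R : realType) (r : nat) (lo hi p : 'rV[R]_r) :
  has_ubound [set dist p q | q in aabb lo hi].
Proof.
  exists (Num.sqrt (\sum_(d < r) ((p 0 d - lo 0 d) ^+ 2 + (p 0 d - hi 0 d) ^+ 2))).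
  move=> x [q Hq <-]; rewrite /dist; apply: ler_wsqrtr; apply: ler_sum => d _.
  move: (Hq d) => /andP [h1 h2].
  have h3 : 0 <= (q 0 d - lo 0 d) * (hi 0 d - q 0 d) by apply: mulr_ge0; rewrite subr_ge0.
  have h4 := sqr_ge0 (p 0 d - lo 0 d - hi 0 d + q 0 d).
  nra.
Qed.

Lemma max_ge0 (R : realType) (r : nat) (lo hi p : 'rV[R]_r) :
  (forall d : 'I_r, lo 0 d <= hi 0 d) -> 0 <= MaxDist p (aabb lo hi).
Proof.
move=> h.
have := ub_le_sup (max_ub lo hi p) (ex_intro2 _ _ lo (aabb_ne h) erefl).
have := dist_ge0 p lo; rewrite /MaxDist; lra.
Qed.

Lemma max_ge (R : realType) (r : nat) (lo hi p e : 'rV[R]_r) :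
  aabb lo hi e -> D2 p e <= MaxDist p (aabb lo hi) ^+ 2.
Proof.
move=> He.
have ub : has_ubound [set dist p q | q in aabb lo hi].
  exists (Num.sqrt (\sum_(d < r) ((p 0 d - lo 0 d) ^+ 2 + (p 0 d - hi 0 d) ^+ 2))).
  move=> x [q Hq <-]; rewrite /dist; apply: ler_wsqrtr; apply: ler_sum => d _.
  move: (Hq d) => /andP [h1 h2].
  have h3 : 0 <= (q 0 d - lo 0 d) * (hi 0 d - q 0 d) by apply: mulr_ge0; rewrite subr_ge0.
  have h4 := sqr_ge0 (p 0 d - lo 0 d - hi 0 d + q 0 d).
  nra.
have := ub_le_sup ub (ex_intro2 _ _ e He erefl) => h.
have h0 := dist_ge0 p e.
rewrite -dist_sqr /MaxDist; nra.
Qed.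

Lemma min_ge0 (R : realType) (r : nat) (lo hi p : 'rV[R]_r) :
  (forall d : 'I_r, lo 0 d <= hi 0 d) -> 0 <= MinDist p (aabb lo hi).
Proof.
move=> h; apply: lb_le_inf.
  by exists (dist p lo); exists lo => //; apply: aabb_ne.
by move=> x [q _ <-]; apply: dist_ge0.
Qed.

Lemma min_le (R : realType) (r : nat) (lo hi p b : 'rV[R]_r) :
  (forall d : 'I_r, lo 0 d <= hi 0 d) -> aabb lo hi b ->
  MinDist p (aabb lo hi) ^+ 2 <= D2 p b.
Proof.
move=> h Hb.
have lb : has_lbound [set dist p q | q in aabb lo hi].
  by exists 0 => x [q _ <-]; apply: dist_ge0.
have := ge_inf lb (ex_intro2 _ _ b Hb erefl) => h1.
have h0 := min_ge0 p h.
rewrite -dist_sqr /MinDist in h0 *; nra.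
Qed.

Lemma upper (R : realType) (r : nat) (lo hi lo' hi' z : 'rV[R]_r) (C : R) :
  (forall d : 'I_r, lo 0 d <= hi 0 d) ->
  (forall d : 'I_r, lo' 0 d <= hi' 0 d) ->
  (forall e b, aabb lo hi e -> aabb lo' hi' b -> D2 z e - D2 z b <= C) ->
  MaxDist z (aabb lo hi) ^+ 2 - MinDist z (aabb lo' hi') ^+ 2 <= C.
Proof.
move=> hE hB H.
have M0 := max_ge0 z hE.
have m0 := min_ge0 z hB.
set M := MaxDist z (aabb lo hi) in M0 *.
set m := MinDist z (aabb lo' hi') in m0 *.
have Mge : forall b, aabb lo' hi' b -> M ^+ 2 <= C + D2 z b.
  move=> b Hb.
  have hCD : 0 <= C + D2 z b.
    have := H lo b (aabb_ne hE) Hb; have := D2_ge0 z lo; lra.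
  have hM : M <= Num.sqrt (C + D2 z b).
    apply: ge_sup; first by exists (dist z lo); exists lo => //; apply: aabb_ne.
    move=> x [q Hq <-]; rewrite /dist; apply: ler_wsqrtr.
    have := H q b Hq Hb; rewrite /D2; lra.
  have := sqr_sqrtr hCD; have := sqrtr_ge0 (C + D2 z b); nra.
have k : Num.sqrt (M ^+ 2 - C) <= m.
  apply: lb_le_inf; first by exists (dist z lo'); exists lo' => //; apply: aabb_ne.
  move=> x [b Hb <-]; rewrite /dist; apply: ler_wsqrtr.
  have := Mge b Hb; rewrite /D2; lra.
have k0 := sqrtr_ge0 (M ^+ 2 - C).
case: (lerP 0 (M ^+ 2 - C)) => hc.
  have := sqr_sqrtr hc; nra.
nra.
Qed.

Lemma affine (R : realType) (r : nat) (p s e b : 'rV[R]_r) (t : R) :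
  D2 (t *: p + (1 - t) *: s) e - D2 (t *: p + (1 - t) *: s) b =
  t * (D2 p e - D2 p b) + (1 - t) * (D2 s e - D2 s b).
Proof.
rewrite /D2 -!sumrB !mulr_sumr -big_split; apply: eq_bigr => d _ /=.
rewrite !mxE; ring.
Qed.

Theorem lemma4p4 (R : realType) (r : nat) (hr : (1 <= r)%N)
  (Elo Ehi Blo Bhi : 'rV[R]_r)
  (hE : forall d : 'I_r, Elo 0 d <= Ehi 0 d)
  (hB : forall d : 'I_r, Blo 0 d <= Bhi 0 d) :
  convex_fun (fun p : 'rV[R]_r =>
    MaxDist p (aabb Elo Ehi) ^+ 2 - MinDist p (aabb Blo Bhi) ^+ 2).
Proof.
move=> p s t /andP [t0 t1].
apply: upper => // e b He Hb.
rewrite affine.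
have a1 := max_ge p He; have a2 := max_ge s He.
have b1 := min_le p hB Hb; have b2 := min_le s hB Hb.
have t1' : 0 <= 1 - t by rewrite subr_ge0.
apply: lerD; apply: ler_wpM2l => //; lra.
Qed.
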